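(* Let $\mathscr{a}\in\mathbb{R}$, $\mathscr{b}\in(\mathscr{a},\infty)$, for $\theta=(\theta_1,\theta_2,\theta_3,\theta_4)\in\mathbb{R}^4$ and $x\in\mathbb{R}$ let $\mathscr{N}^\theta(x)=\theta_3\max\{\theta_1x+\theta_2,0\}+\theta_4$ and $I^\theta=\{x\in[\mathscr{a},\mathscr{b}]\colon\theta_1x+\theta_2>0\}$, let $\lambda$ be the Lebesgue–Borel measure on $\mathbb{R}$, and let $(\theta_n)_{n\in\mathbb{N}}\subseteq\mathbb{R}^4$, $\theta_n=(\theta_{n,1},\theta_{n,2},\theta_{n,3},\theta_{n,4})$, and $h\in C([\mathscr{a},\mathscr{b}],\mathbb{R})$ satisfy $\lim_{n\to\infty}\sup_{x\in[\mathscr{a},\mathscr{b}]}|\mathscr{N}^{\theta_n}(x)-h(x)|=0$, where $h$ is not constant. Then there exists $\vartheta=(\vartheta_1,\dots,\vartheta_4)\in\mathbb{R}^4$ such that $\mathscr{N}^\vartheta|_{[\mathscr{a},\mathscr{b}]}=h$, $\lim_{n\to\infty}|\theta_{n,1}\theta_{n,3}-\vartheta_1\vartheta_3|=0$, and $\lim_{n\to\infty}\lambda(I^{\theta_n}\,\Delta\,I^\vartheta)=0$.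
   Context: $A\,\Delta\,B$ denotes the symmetric difference of sets. *)

(* Defs.v *)
From HB Require Import structures.
From mathcomp Require Import all_boot all_order all_algebra.
From mathcomp Require Import all_classical all_reals all_analysis.
Set Implicit Arguments. Unset Strict Implicit. Unset Printing Implicit Defensive.
Import Order.TTheory GRing.Theory Num.Theory.
Import numFieldNormedType.Exports.
Local Open Scope classical_set_scope.
Local Open Scope ring_scope.

Definition param (R : realType) := (R * R * R * R)%type.

Definition th1 {R : realType} (t : param R) : R := t.1.1.1.
Definition th2 {R : realType} (t : param R) : R := t.1.1.2.
Definition th3 {R : realType} (t : param R) : R := t.1.2.
Definition th4 {R : realType} (t : param R) : R := t.2.

Definition realization {R : realType} (t : param R) (x : R) : R :=
  th3 t * Num.max (th1 t * x + th2 t) 0 + th4 t.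

Definition active_set {R : realType} (a b : R) (t : param R) : set R :=
  [set x | x \in `[a, b] /\ 0 < th1 t * x + th2 t].

(* Main.v *)
Require Import Defs.
From HB Require Import structures.
From mathcomp Require Import all_boot all_order all_algebra.
From mathcomp Require Import all_classical all_reals all_analysis.
From mathcomp Require Import ring lra measurable_realfun.
Import Order.TTheory GRing.Theory Num.Theory.
Import numFieldNormedType.Exports.
Local Open Scope classical_set_scope.
Local Open Scope ring_scope.

Lemma unif_ext (R : realType) (a b : R) (g : nat -> R -> R) (h : R -> R) :
  (fun n => ereal_sup [set (`|g n x - h x|)%:E | x in `[a, b]]) @ \oo --> 0%E ->
  forall d : R, 0 < d -> \forall n \near \oo, forall x, x \in `[a, b] -> `|g n x - h x| < d.
Proof.
move=> /fine_cvgP[Hfin Hc] d d0.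
move/cvgrPdist_lt : Hc => /(_ d d0) Hc.
move: Hfin Hc; apply: filterS2 => n Hf Hl x xab.
have : ((`|g n x - h x|)%:E <= ereal_sup [set (`|g n x - h x|)%:E | x in `[a, b]])%E.
  apply: ereal_sup_ubound => /=; exists x => //.
move: Hl => /=; rewrite sub0r normrN.
move: (ereal_sup _) Hf => [r| |] //= _ Hr.
rewrite lee_fin => H; apply: (le_lt_trans H); apply: le_lt_trans Hr; exact: ler_norm.
Qed.

Lemma cont_eps (R : realType) (a b : R) (h : R -> R) :
  {within `[a, b], continuous h} -> forall x, x \in `[a, b] -> forall e, 0 < e ->
  exists2 d, 0 < d & forall y, y \in `[a, b] -> `|y - x| < d -> `|h y - h x| < e.
Proof.
move=> /subspace_continuousP hc x xab e e0.
have := hc x; rewrite /= inE => /(_ xab).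
move/cvgrPdist_lt => /(_ e e0).
rewrite near_withinE => /nbhs_ballP[d d0 Hd].
exists d => // y yab yx.
have := Hd y; rewrite -ball_normE /ball /= distrC => /(_ yx).
by rewrite /= inE => /(_ yab); rewrite distrC.
Qed.

Lemma inab (R : realType) (a b x : R) : (x \in `[a, b]) = (a <= x) && (x <= b).
Proof. by rewrite in_itv. Qed.

Lemma small0 (R : realType) (X : R) : (forall e : R, 0 < e -> `|X| < e) -> X = 0.
Proof.
move=> H; apply/eqP; rewrite -normr_eq0; apply/negPn/negP => HX.
have := H `|X|; rewrite normr_gt0 -normr_eq0 HX ltxx; by move=> /(_ isT).
Qed.

Definition RS {R : realType} (a b : R) (h : R -> R) (d : R) :=
  exists g : R -> R, exists s t : R,
    (forall x, x \in `[a, b] -> `|g x - h x| <= d) /\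
    (forall x, x \in `[a, b] -> x <= t -> g x = g a) /\
    (forall x y, x \in `[a, b] -> y \in `[a, b] -> t <= x -> t <= y ->
       g y - g x = s * (y - x)).

Lemma step1 (R : realType) (a b : R) (hab : a < b) (h : R -> R)
  (HR : forall d : R, 0 < d -> RS a b h d) (y p0 q0 : R) :
  y \in `[a, b] -> h y != h a -> y <= p0 -> p0 < q0 -> q0 <= b ->
  forall p q, y <= p -> p <= b -> y <= q -> q <= b ->
  h q - h p = (h q0 - h p0) / (q0 - p0) * (q - p).
Proof.
rewrite inab => /andP[ay yb] hya yp0 pq0 q0b p q yp pb yq qb.
have L0 : 0 < q0 - p0 by rewrite subr_gt0.
set L := q0 - p0 in L0 *.
apply/eqP; rewrite -subr_eq0; apply/eqP/small0 => e e0.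
set D := `|h y - h a|. have D0 : 0 < D by rewrite normr_gt0 subr_eq0.
set c1 := (b - a) / L.
have c10 : 0 <= c1 by rewrite /c1 divr_ge0 // ?subr_ge0 ?ltW.
set d := Num.min (D / 4) (e / (4 * (1 + c1))).
have d0 : 0 < d by rewrite lt_min !divr_gt0 //; lra.
have dD : d <= D / 4 by rewrite /d ge_min lexx.
have de : d * (1 + c1) <= e / 4.
  rewrite -ler_pdivlMr; last lra.
  by rewrite -mulrA -invfM /d ge_min lexx orbT.
have [g [s [t [Hc [Hl Ha]]]]] := HR d d0.
have inI : forall x, a <= x -> x <= b -> x \in `[a, b] by move=> x ? ?; rewrite inab; apply/andP.
have ty : t < y.
  rewrite ltNge; apply/negP => yt.
  have := Hl y (inI _ ay yb) yt.
  have := Hc y (inI _ ay yb); have := Hc a (inI a (lexx a) (ltW hab)).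
  move=> H1 H2 H3.
  have : D <= `|g a - h a| + `|h y - g y|.
    rewrite /D (_ : h y - h a = (g a - h a) + (h y - g y)); last by rewrite H3; ring.
    exact: ler_normD.
  rewrite (distrC (h y)); lra.
have Hgq := Ha p q (inI _ (le_trans ay yp) pb) (inI _ (le_trans ay yq) qb)
   (ltW (lt_le_trans ty yp)) (ltW (lt_le_trans ty yq)).
have Hg0 := Ha p0 q0 (inI _ (le_trans ay yp0) (le_trans (ltW pq0) q0b)) (inI _ (le_trans ay (le_trans yp0 (ltW pq0))) q0b)
   (ltW (lt_le_trans ty yp0)) (ltW (lt_le_trans ty (le_trans yp0 (ltW pq0)))).
have HA : `|(g q - h q) - (g p - h p)| <= 2 * d.
  apply: le_trans (ler_normB _ _) _.
  have := Hc q (inI _ (le_trans ay yq) qb); have := Hc p (inI _ (le_trans ay yp) pb); lra.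
have HB : `|(g q0 - h q0) - (g p0 - h p0)| <= 2 * d.
  apply: le_trans (ler_normB _ _) _.
  have := Hc q0 (inI _ (le_trans ay (le_trans yp0 (ltW pq0))) q0b).
  have := Hc p0 (inI _ (le_trans ay yp0) (le_trans (ltW pq0) q0b)); lra.
set A := (g q - h q) - (g p - h p) in HA.
set B := (g q0 - h q0) - (g p0 - h p0) in HB.
have -> : h q - h p - (h q0 - h p0) / L * (q - p) = - A + B * ((q - p) / L).
  have E1 : h q - h p = s * (q - p) - A by rewrite /A -Hgq; ring.
  have E2 : h q0 - h p0 = s * L - B by rewrite /B /L -Hg0; ring.
  rewrite E1 E2; field; exact: lt0r_neq0.
have Hqp : `|(q - p) / L| <= c1.
  rewrite normrM (@gtr0_norm _ L^-1) ?invr_gt0 // /c1 ler_pM2r ?invr_gt0 //.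
  rewrite ler_norml; apply/andP; split; lra.
have HBq : `|B * ((q - p) / L)| <= 2 * d * c1.
  rewrite normrM; apply: ler_pM => //.
apply: le_lt_trans (ler_normD _ _) _; rewrite normrN.
lra.
Qed.

Definition CE {R : realType} (a b : R) (h : R -> R) := forall x, x \in `[a, b] -> forall e : R, 0 < e ->
  exists2 d : R, 0 < d & forall y, y \in `[a, b] -> `|y - x| < d -> `|h y - h x| < e.

Lemma coreR (R : realType) (a b : R) (hab : a < b) (h : R -> R)
  (hc : CE a b h)
  (hnc : exists x y, x \in `[a, b] /\ y \in `[a, b] /\ h x != h y)
  (HR : forall d : R, 0 < d -> RS a b h d) :
  exists T S : R, forall x, x \in `[a, b] -> h x = S * Num.max (x - T) 0 + h a.
Proof.
have inI : forall x, a <= x -> x <= b -> x \in `[a, b] by move=> x ? ?; rewrite inab; apply/andP.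
have [y1 [ay1 [y1b hy1]]] : exists y1, a <= y1 /\ y1 < b /\ h y1 != h a.
  case: (pselect (exists y1, a <= y1 /\ y1 < b /\ h y1 != h a)) => // Hn; exfalso.
  have Hall : forall y, a <= y -> y < b -> h y = h a.
    move=> y ay yb; apply/eqP; apply/negPn/negP => hy; apply: Hn; exists y; split => //.
  have hba : h b != h a.
    apply/negP => /eqP hba; case: hnc => x [z [xab [zab]]].
    have HH : forall u, u \in `[a, b] -> h u = h a.
      move=> u; rewrite inab => /andP[au ub]; case: (ltrP u b) => [ub'|bu]; first exact: Hall.
      by have -> : u = b by apply/eqP; rewrite eq_le ub bu.
    by rewrite !HH // eqxx.
  have e0 : 0 < `|h b - h a| by rewrite normr_gt0 subr_eq0.
  have [d d0 Hd] := hc b (inI b (ltW hab) (lexx b)) _ e0.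
  set y := b - Num.min d (b - a) / 2.
  have m0 : 0 < Num.min d (b - a) by rewrite lt_min d0 subr_gt0.
  have m1 : Num.min d (b - a) <= d by rewrite ge_min lexx.
  have m2 : Num.min d (b - a) <= b - a by rewrite ge_min lexx orbT.
  have ay : a <= y by rewrite /y; lra.
  have yb : y < b by rewrite /y; lra.
  have := Hd y (inI y ay (ltW yb)).
  rewrite Hall // (distrC (h a)) ltxx.
  have -> : `|y - b| = Num.min d (b - a) / 2.
    rewrite /y (_ : b - Num.min d (b - a) / 2 - b = - (Num.min d (b - a) / 2)); last by ring.
    rewrite normrN gtr0_norm //; lra.
  move=> H; have : Num.min d (b - a) / 2 < d by lra.
  by move=> /H.
set A := [set y | y \in `[a, b] /\ h y != h a].
have Ay1 : A y1 by split => //; apply: inI => //; exact: ltW.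
have hlb : has_lbound A by exists a => y [] /[!inab] /andP[].
set T := inf A.
have Tle : forall y, A y -> T <= y by move=> y Ay; exact: ge_inf.
have aT : a <= T by apply: lb_le_inf; [by exists y1 | by move=> y [] /[!inab] /andP[]].
have Ty1 : T <= y1 by exact: Tle.
have below : forall y, y \in `[a, b] -> y < T -> h y = h a.
  move=> y yab yT; apply/eqP; apply/negPn/negP => hy.
  by have := Tle y (conj yab hy); rewrite leNgt yT.
have above : forall x, T < x -> exists2 y, A y & y < x.
  by move=> x Tx; apply: inf_lt => //; exists y1.
set S := (h b - h y1) / (b - y1).
have slope : forall y, A y -> forall p q, y <= p -> p <= b -> y <= q -> q <= b ->
    h q - h p = S * (q - p).
  move=> y [yab hy] p q yp pb yq qb.
  case: (leP y y1) => yy1.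
    exact: (@step1 _ _ _ hab _ HR _ _ _ yab hy yy1 y1b (lexx b) _ _ yp pb yq qb).
  apply: (@step1 _ _ _ hab _ HR _ _ _ (inI y1 ay1 (ltW y1b)) hy1 (lexx y1) y1b (lexx b)); lra.
have Tab : T \in `[a, b] by apply: inI => //; lra.
have hT : h T = h a.
  case: (ltrP a T) => [aT'|Ta]; last first.
    by have -> : T = a by apply/eqP; rewrite eq_le Ta aT.
  apply/eqP; rewrite -subr_eq0; apply/eqP/small0 => e e0.
  have [d d0 Hd] := hc T Tab _ e0.
  have m0 : 0 < Num.min d (T - a) by rewrite lt_min d0 subr_gt0.
  have m1 : Num.min d (T - a) <= d by rewrite ge_min lexx.
  have m2 : Num.min d (T - a) <= T - a by rewrite ge_min lexx orbT.
  set y := T - Num.min d (T - a) / 2.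
  have ay : a <= y by rewrite /y; lra.
  have yT : y < T by rewrite /y; lra.
  have yab : y \in `[a, b] by apply: inI => //; lra.
  have := Hd y yab; rewrite below // (distrC (h a)).
  apply.
  rewrite /y (_ : T - Num.min d (T - a) / 2 - T = - (Num.min d (T - a) / 2)); last by ring.
  rewrite normrN gtr0_norm //; lra.
have aboveT : forall x, x \in `[a, b] -> T < x -> h x = h a + S * (x - T).
  move=> x xab Tx.
  apply/eqP; rewrite -subr_eq0; apply/eqP/small0 => e e0.
  have e20 : 0 < e / 2 by lra.
  have [d d0 Hd] := hc T Tab _ e20.
  have S1 : 0 < `|S| + 1 by have := normr_ge0 S; lra.
  set r := Num.min (Num.min d (x - T)) (e / (2 * (`|S| + 1))).
  have r0 : 0 < r by rewrite !lt_min d0 subr_gt0 Tx /= divr_gt0 //; lra.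
  have r1 : r <= d by rewrite /r !ge_min lexx.
  have r2 : r <= x - T by rewrite /r !ge_min lexx !orbT.
  have r3' : r <= e / (2 * (`|S| + 1)) by rewrite /r ge_min lexx orbT.
  have r3 : (`|S| + 1) * r <= e / 2.
    rewrite mulrC -ler_pdivlMr //.
    rewrite (_ : e / (2 * (`|S| + 1)) = e / 2 / (`|S| + 1)) in r3' => //.
    by field; rewrite gt_eqF.
  have [y Ay yr] := above (T + r) ltac:(lra).
  have Ty := Tle y Ay.
  have yab := Ay.1.
  have Hy := Hd y yab ltac:(rewrite ger0_norm; lra).
  have Hs := slope y Ay y x (lexx y) ltac:(move: yab; rewrite inab => /andP[]//)
     ltac:(lra) ltac:(move: xab; rewrite inab => /andP[]//).
  have -> : h x - (h a + S * (x - T)) = (h y - h T) - S * (y - T).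
    have Ex : h x = h y + S * (x - y) by rewrite -Hs; ring.
    rewrite -hT Ex; ring.
  apply: le_lt_trans (ler_normB _ _) _.
  rewrite normrM (ger0_norm (x := y - T)) ?subr_ge0 //.
  have : `|S| * (y - T) <= `|S| * r by apply: ler_wpM2l => //; lra.
  lra.
exists T, S => x xab.
case: (leP x T) => xT.
  rewrite max_r ?subr_le0 // mulr0 add0r.
  case: (ltrP x T) => xT'; first exact: below.
  by have -> : x = T by apply/eqP; rewrite eq_le xT xT'.
rewrite max_l ?subr_ge0 ?ltW // aboveT //; ring.
Qed.

Definition LS {R : realType} (a b : R) (h : R -> R) (d : R) :=
  exists g : R -> R, exists s t : R,
    (forall x, x \in `[a, b] -> `|g x - h x| <= d) /\
    (forall x, x \in `[a, b] -> t <= x -> g x = g b) /\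
    (forall x y, x \in `[a, b] -> y \in `[a, b] -> x <= t -> y <= t ->
       g y - g x = s * (y - x)).

Lemma refl_in {R : realType} {a b x : R} : x \in `[a, b] -> a + b - x \in `[a, b].
Proof. rewrite !inab => /andP[ax xb]; apply/andP; split; lra. Qed.

Lemma reflK {R : realType} {a b x : R} : a + b - (a + b - x) = x.
Proof. ring. Qed.

Lemma coreL (R : realType) (a b : R) (hab : a < b) (h : R -> R)
  (hc : CE a b h)
  (hnc : exists x y, x \in `[a, b] /\ y \in `[a, b] /\ h x != h y)
  (HL : forall d : R, 0 < d -> LS a b h d) :
  exists T S : R, forall x, x \in `[a, b] -> h x = S * Num.max (a + b - x - T) 0 + h b.
Proof.
set h' := fun x => h (a + b - x).
have [T [S HT]] : exists T S : R, forall x, x \in `[a, b] -> h' x = S * Num.max (x - T) 0 + h' a.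
  apply: coreR => //.
- move=> x xab e e0.
  have [d d0 Hd] := hc _ (refl_in xab) e e0.
  exists d => // y yab yx; apply: Hd; first exact: refl_in.
  by rewrite (_ : a + b - y - (a + b - x) = - (y - x)) ?normrN //; ring.
- case: hnc => x [y [xab [yab hxy]]].
  exists (a + b - x), (a + b - y); split; first exact: refl_in.
  by split; [exact: refl_in | rewrite /h' !reflK].
- move=> d d0; have [g [s [t [H1 [H2 H3]]]]] := HL d d0.
  exists (fun x => g (a + b - x)), (- s), (a + b - t); split; [|split].
  + by move=> x xab; apply: H1; exact: refl_in.
  + move=> x xab tx; rewrite (_ : a + b - a = b); last by ring.
    apply: H2; first exact: refl_in. lra.
  + move=> x y xab yab tx ty.
    rewrite H3; [|exact: refl_in|exact: refl_in|lra|lra]. ring.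
exists T, S => x xab.
have := HT _ (refl_in xab); rewrite /h' reflK => ->.
by rewrite (_ : a + b - a = b) //; ring.
Qed.

Lemma meas_active (R : realType) (a b w c : R) :
  measurable ([set x | x \in `[a, b] /\ 0 < w * x + c] : set R).
Proof.
have mf : measurable_fun setT (fun x : R => w * x + c).
  apply: continuous_measurable_fun => x.
  apply: continuousD; last exact: cst_continuous.
  apply: continuousM; [exact: cst_continuous | by move=> ?; exact: cvg_id].
have := mf measurableT _ (measurable_itv `]0, +oo[).
rewrite setTI => H.
have -> : [set x | x \in `[a, b] /\ 0 < w * x + c] = [set` `[a, b]] `&` ((fun x => w * x + c) @^-1` [set` `]0, +oo[]).
  apply/seteqP; split => x /=; rewrite !in_itv /= ?andbT //.
apply: measurableI => //; exact: measurable_itv.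
Qed.

Lemma meas_bound (R : realType) (a b t e : R) (Y : set R) : measurable Y -> 0 <= e ->
  Y `<=` ball a e `|` ball b e `|` ball t e ->
  (lebesgue_measure Y <= (e *+ 6)%:E)%E.
Proof.
move=> mY e0 HY.
have mB := @measurable_ball R.
have mU : measurable (ball a e `|` ball b e `|` ball t e : set R).
  by apply: measurableU; [apply: measurableU|]; exact: mB.
have := @le_measure _ _ _ (@lebesgue_measure R) Y _ (mem_set mY) (mem_set mU) HY.
move/le_trans; apply.
apply: (le_trans (measureU2 _ _ _)); [|exact: mB|].
  by apply: measurableU; exact: mB.
apply: (le_trans (leeD (measureU2 _ _ _) (lexx _))); [exact: mB|exact: mB|].
have Eb : forall x, lebesgue_measure (ball x e : set R) = (e *+ 2)%:E.
  by move=> x; exact: lebesgue_measure_ball.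
apply: (@le_trans _ _ ((e *+ 2)%:E + (e *+ 2)%:E + (e *+ 2)%:E)%E).
  apply: leeD; first apply: leeD.
  all: rewrite le_eqVlt; apply/orP; left; apply/eqP.
  - exact: (Eb a).
  - exact: (Eb b).
  - exact: (Eb t).
by rewrite -!EFinD -!mulrnDr.
Qed.

Lemma real_inactive {R : realType} (t : param R) x :
  th1 t * x + th2 t <= 0 -> realization t x = th4 t.
Proof. by move=> H; rewrite /realization max_r // mulr0 add0r. Qed.

Lemma real_active {R : realType} (t : param R) x :
  0 <= th1 t * x + th2 t -> realization t x = th3 t * (th1 t * x + th2 t) + th4 t.
Proof. by move=> H; rewrite /realization max_l. Qed.

Lemma max0_lip {R : realType} (u u' : R) : `|Num.max u 0 - Num.max u' 0| <= `|u - u'|.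
Proof.
have H1 := ler_norm (u - u'); have H2 : -(u - u') <= `|u - u'| by rewrite -normrN ler_norm.
rewrite ler_norml; case: (lerP 0 u) => hu; case: (lerP 0 u') => hu'.
all: apply/andP; split; lra.
Qed.

Lemma real_lip {R : realType} (t : param R) x y :
  `|realization t x - realization t y| <= `|th1 t * th3 t| * `|x - y|.
Proof.
rewrite /realization (_ : forall A B C D : R, A * B + C - (A * D + C) = A * (B - D)); last by move=> *; ring.
rewrite normrM [`|th1 t * th3 t|]normrM (mulrC `|th1 t|) -mulrA; apply: ler_wpM2l => //.
apply: (le_trans (max0_lip _ _)).
by rewrite (_ : th1 t * x + th2 t - (th1 t * y + th2 t) = th1 t * (x - y)) ?normrM //; ring.
Qed.

Lemma keyK {R : realType} {a b : R} {v t : param R} {h : R -> R} {x0 y0 d e x : R} :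
  (forall x, x \in `[a, b] -> realization v x = h x) ->
  x0 \in `[a, b] -> y0 \in `[a, b] -> 0 < e ->
  (forall x, x \in `[a, b] -> `|realization t x - h x| <= d) ->
  2 * d < `|th1 v * th3 v| * e ->
  2 * d * e + 2 * d * (b - a) < `|h x0 - h y0| * e ->
  a + e <= x -> x <= b - e -> `|th1 v| * e <= `|th1 v * x + th2 v| ->
  (0 < th1 v * x + th2 v) <-> (0 < th1 t * x + th2 t).
Proof.
move=> hv x0ab y0ab e0 hcl c1 c2 ax xb far.
have inI : forall z, a <= z -> z <= b -> z \in `[a, b] by move=> z ? ?; rewrite inab; apply/andP.
have xab : x \in `[a, b] by apply: inI; lra.
have zpab : x + e \in `[a, b] by apply: inI; lra.
have zmab : x - e \in `[a, b] by apply: inI; lra.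
have Ewe : `|th1 v * e| = `|th1 v| * e by rewrite normrM (gtr0_norm e0).
have we1 := ler_norm (th1 v * e).
have we2 : - (th1 v * e) <= `|th1 v * e| by rewrite -normrN ler_norm.
have Ep : th1 v * (x + e) + th2 v = (th1 v * x + th2 v) + th1 v * e by ring.
have Em : th1 v * (x - e) + th2 v = (th1 v * x + th2 v) - th1 v * e by ring.
have Etp : th1 t * (x + e) + th2 t = (th1 t * x + th2 t) + th1 t * e by ring.
have Etm : th1 t * (x - e) + th2 t = (th1 t * x + th2 t) - th1 t * e by ring.
have cl2 : forall y z, y \in `[a, b] -> z \in `[a, b] ->
    `|h y - h z| <= 2 * d + `|realization t y - realization t z|.
  move=> y z yab zab.
  have := hcl y yab; have := hcl z zab.
  rewrite (_ : h y - h z = (realization t y - realization t z) - (realization t y - h y)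
      + (realization t z - h z)); last by ring.
  move=> H1 H2; apply: (le_trans (ler_normD _ _)).
  have := ler_normB (realization t y - realization t z) (realization t y - h y). lra.
split => [u0|u'0].
-
  rewrite ltNge; apply/negP => u'0.
  have Hu : `|th1 v * x + th2 v| = th1 v * x + th2 v by rewrite gtr0_norm.
  have hp : realization v (x + e) - realization v x = th1 v * th3 v * e.
    rewrite !real_active; [|lra|lra]. rewrite Ep; ring.
  have hm : realization v (x - e) - realization v x = - (th1 v * th3 v * e).
    rewrite !real_active; [|lra|lra]. rewrite Em; ring.
  rewrite !hv // in hp hm.
  have Hz : exists2 z, z \in `[a, b] & `|h z - h x| = `|th1 v * th3 v| * e /\
      realization t z = realization t x.
    case: (lerP (th1 t * (x + e) + th2 t) 0) => Hp.
      exists (x + e) => //; split; first by rewrite hp normrM (gtr0_norm e0).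
      by rewrite !real_inactive //.
    exists (x - e) => //; split; first by rewrite hm normrN normrM (gtr0_norm e0).
    by rewrite !real_inactive //; lra.
  case: Hz => z zab [Hz1 Hz2].
  have := cl2 z x zab xab; rewrite Hz1 Hz2 subrr normr0 addr0; lra.
-
  rewrite ltNge; apply/negP => u0.
  have Hu : `|th1 v * x + th2 v| = - (th1 v * x + th2 v) by rewrite ler0_norm.
  have hp : realization v (x + e) = realization v x.
    by rewrite !real_inactive //; lra.
  have hm : realization v (x - e) = realization v x.
    by rewrite !real_inactive //; lra.
  rewrite !hv // in hp hm.
  set s' := th1 t * th3 t.
  have Hz : exists2 z, z \in `[a, b] & h z = h x /\
      `|realization t z - realization t x| = `|s'| * e.
    case: (lerP 0 (th1 t * (x + e) + th2 t)) => Hp.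
      exists (x + e) => //; split => //.
      rewrite !real_active; [|lra|lra].
      rewrite (_ : forall A B C D : R, A * B + C - (A * D + C) = A * (B - D)); last by move=> *; ring.
      rewrite Etp (_ : th1 t * x + th2 t + th1 t * e - (th1 t * x + th2 t) = th1 t * e); last by ring.
      by rewrite mulrA normrM (gtr0_norm e0) /s' (mulrC (th3 t)).
    exists (x - e) => //; split => //.
    rewrite !real_active; [|lra|lra].
    rewrite (_ : forall A B C D : R, A * B + C - (A * D + C) = A * (B - D)); last by move=> *; ring.
    rewrite Etm (_ : th1 t * x + th2 t - th1 t * e - (th1 t * x + th2 t) = - (th1 t * e)); last by ring.
    by rewrite mulrN normrN mulrA normrM (gtr0_norm e0) /s' (mulrC (th3 t)).
  case: Hz => z zab [Hz1 Hz2].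
  have Hs : `|s'| * e <= 2 * d.
    rewrite -Hz2.
    have := hcl z zab; have := hcl x xab.
    rewrite (_ : realization t z - realization t x = (realization t z - h z) - (realization t x - h x)); last by rewrite Hz1; ring.
    move=> H1 H2; apply: (le_trans (ler_normB _ _)); lra.
  have H0 := cl2 x0 y0 x0ab y0ab.
  have Hl := real_lip t x0 y0.
  have Hxy : `|x0 - y0| <= b - a.
    move: x0ab y0ab; rewrite !inab => /andP[? ?] /andP[? ?].
    rewrite ler_norml; apply/andP; split; lra.
  have H3 : `|s'| * `|x0 - y0| <= `|s'| * (b - a) by apply: ler_wpM2l.
  have H4 : `|h x0 - h y0| * e <= (2 * d + `|s'| * (b - a)) * e.
    apply: ler_wpM2r; [lra|]. rewrite /s' in H3 *; lra.
  have H5 : `|s'| * (b - a) * e <= 2 * d * (b - a).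
    rewrite mulrAC; apply: ler_wpM2r => //. 
    move: x0ab y0ab; rewrite !inab => /andP[? ?] /andP[? ?]; lra.
  move: H4; rewrite mulrDl; lra.
Qed.

Lemma rs_of {R : realType} (a b d : R) (h : R -> R) (t : param R) :
  0 <= th1 t -> (forall x, x \in `[a, b] -> `|realization t x - h x| <= d) ->
  RS a b h d.
Proof.
move=> w0 hcl; exists (realization t).
case: (ltrP 0 (th1 t)) => wp; last first.
  have w00 : th1 t = 0 by apply/eqP; rewrite eq_le wp w0.
  exists 0, (a - 1); split => //; split.
    by move=> x; rewrite inab => /andP[ax _] xa; exfalso; lra.
  by move=> x y _ _ _ _; rewrite /realization w00 !mul0r !add0r subrr.
set tau := - th2 t / th1 t.
have Et : th1 t * tau = - th2 t by rewrite /tau; field; exact: lt0r_neq0.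
exists (th1 t * th3 t), tau; split => //; split.
  move=> x; rewrite inab => /andP[ax xb] xt.
  rewrite !real_inactive //; nra.
move=> x y _ _ tx ty.
rewrite !real_active; [|nra|nra]; ring.
Qed.

Lemma ls_of {R : realType} (a b d : R) (h : R -> R) (t : param R) :
  th1 t < 0 -> (forall x, x \in `[a, b] -> `|realization t x - h x| <= d) ->
  LS a b h d.
Proof.
move=> wn hcl; exists (realization t).
set tau := - th2 t / th1 t.
have Et : th1 t * tau = - th2 t by rewrite /tau; field; exact: ltr0_neq0.
exists (th1 t * th3 t), tau; split => //; split.
  move=> x; rewrite inab => /andP[ax xb] xt.
  rewrite !real_inactive //; nra.
move=> x y _ _ tx ty.
rewrite !real_active; [|nra|nra]; ring.
Qed.

Lemma exists_v (R : realType) (a b : R) (hab : a < b) (theta : nat -> param R) (h : R -> R)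
  (hc : CE a b h)
  (hnc : exists x y, x \in `[a, b] /\ y \in `[a, b] /\ h x != h y)
  (hu : forall d : R, 0 < d -> \forall n \near \oo, forall x, x \in `[a, b] ->
      `|realization (theta n) x - h x| < d) :
  exists v : param R, forall x, x \in `[a, b] -> realization v x = h x.
Proof.
case: (pselect (forall d : R, 0 < d -> RS a b h d)) => [HR | nHR].
  have [T [S HT]] := @coreR _ _ _ hab _ hc hnc HR.
  exists (1, - T, S, h a) => x xab.
  by rewrite (HT x xab) /realization /th1 /th2 /th3 /th4 /= mul1r.
have [d0 [d00 nR]] : exists d0 : R, 0 < d0 /\ ~ RS a b h d0.
  case: (pselect (exists d0 : R, 0 < d0 /\ ~ RS a b h d0)) => // H; exfalso.
  apply: nHR => d dp; case: (pselect (RS a b h d)) => // nr; exfalso.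
  by apply: H; exists d.
have HL : forall d : R, 0 < d -> LS a b h d.
  move=> d dp.
  have d10 : 0 < Num.min d d0 by rewrite lt_min dp d00.
  have [n Hn] := filter_ex (hu _ d10).
  have hcl : forall d', Num.min d d0 <= d' ->
      forall x, x \in `[a, b] -> `|realization (theta n) x - h x| <= d'.
    by move=> d' Hd' x xab; apply: ltW; apply: lt_le_trans Hd'; exact: Hn.
  case: (ltrP (th1 (theta n)) 0) => wn.
    by apply: ls_of wn _; apply: hcl; rewrite ge_min lexx.
  by exfalso; apply: nR; apply: rs_of wn _; apply: hcl; rewrite ge_min lexx orbT.
have [T [S HT]] := @coreL _ _ _ hab _ hc hnc HL.
exists (-1, a + b - T, S, h b) => x xab.
rewrite (HT x xab) /realization /th1 /th2 /th3 /th4 /=.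
by rewrite (_ : -1 * x + (a + b - T) = a + b - x - T) //; ring.
Qed.

Lemma ereal_small {R : realType} (m : \bar R) (eta : R) :
  (0 <= m)%E -> (m <= (eta / 12 *+ 6)%:E)%E -> 0 < eta -> `|0 - fine m| < eta.
Proof.
case: m => [r| |] //=.
rewrite !lee_fin => r0 Hr e0; rewrite sub0r normrN ger0_norm //.
have E : eta / 12 *+ 6 = eta / 2 by rewrite -mulr_natr; field.
rewrite E in Hr; lra.
Qed.

Theorem lemma6p4 (R : realType) (a b : R) (hab : a < b)
  (theta : nat -> param R) (h : R -> R)
  (hcont : {within `[a, b], continuous h})
  (hnc : exists x y, x \in `[a, b] /\ y \in `[a, b] /\ h x != h y)
  (hconv : (fun n => ereal_sup [set (`|realization (theta n) x - h x|)%:E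
                                 | x in `[a, b]]) @ \oo --> 0%E) :
  exists v : param R,
    (forall x, x \in `[a, b] -> realization v x = h x) /\
    (fun n => `|th1 (theta n) * th3 (theta n) - th1 v * th3 v|) @ \oo --> (0 : R) /\
    (fun n => lebesgue_measure (active_set a b (theta n) `+` active_set a b v))
      @ \oo --> 0%E.
Proof.
have hu := @unif_ext R a b (fun n => realization (theta n)) h hconv.
have hc : CE a b h := @cont_eps R a b h hcont.
have [v hv] := @exists_v R a b hab theta h hc hnc hu.
exists v; split => //.
have inI : forall z, a <= z -> z <= b -> z \in `[a, b] by move=> z ? ?; rewrite inab; apply/andP.
case: hnc => x0 [y0 [x0ab [y0ab hxy]]].
have V0 : 0 < `|h x0 - h y0| by rewrite normr_gt0 subr_eq0.
have S0 : 0 < `|th1 v * th3 v|.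
  rewrite normr_gt0; apply/negP => /eqP S00; move/negP: hxy; apply.
  rewrite -!hv // /realization; move/eqP: S00; rewrite mulf_eq0 => /orP[/eqP-> | /eqP->].
    by rewrite !mul0r !add0r.
  by rewrite !mul0r.
have w0 : 0 < `|th1 v|.
  rewrite normr_gt0; apply/negP => /eqP w00; move: S0; rewrite w00 mul0r normr0 ltxx.
  by [].
have Hdel : forall e : R, 0 < e -> exists2 d : R, 0 < d &
    (2 * d < `|th1 v * th3 v| * e /\
     2 * d * e + 2 * d * (b - a) < `|h x0 - h y0| * e).
  move=> e e0.
  have eba : 0 < e + (b - a) by lra.
  set d := Num.min (`|th1 v * th3 v| * e / 4) (`|h x0 - h y0| * e / (4 * (e + (b - a)))).
  have d0 : 0 < d by rewrite lt_min !divr_gt0 ?mulr_gt0 //; lra.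
  have d1 : d <= `|th1 v * th3 v| * e / 4 by rewrite /d ge_min lexx.
  have d2' : d <= `|h x0 - h y0| * e / (4 * (e + (b - a))) by rewrite /d ge_min lexx orbT.
  have d2 : d * (e + (b - a)) <= `|h x0 - h y0| * e / 4.
    rewrite -ler_pdivlMr //; apply: (le_trans d2').
    rewrite le_eqVlt; apply/orP; left; apply/eqP; field; lra.
  have SeP : 0 < `|th1 v * th3 v| * e by rewrite mulr_gt0.
  have VeP : 0 < `|h x0 - h y0| * e by rewrite mulr_gt0.
  exists d => //; split; lra.
split.
-
  have [xs [xsab us]] : exists xs, xs \in `[a, b] /\ 0 < th1 v * xs + th2 v.
    case: (pselect (exists xs, xs \in `[a, b] /\ 0 < th1 v * xs + th2 v)) => // H; exfalso.
    have Hi : forall z, z \in `[a, b] -> h z = th4 v.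
      move=> z zab; rewrite -hv // real_inactive //; rewrite leNgt; apply/negP => Hz.
      by apply: H; exists z.
    by move/negP: hxy; apply; rewrite !Hi.
  set u := th1 v * xs + th2 v in us.
  set r := u / (2 * `|th1 v|).
  have r0 : 0 < r by rewrite divr_gt0 // mulr_gt0.
  have ru : `|th1 v| * r * 2 = u by rewrite /r; field; rewrite gt_eqF.
  have Hact : forall z, xs - r <= z -> z <= xs + r -> `|th1 v| * r <= th1 v * z + th2 v.
    move=> z z1 z2.
    have Hz : `|z - xs| <= r by rewrite ler_norml; apply/andP; split; lra.
    have H1 : `|th1 v * (z - xs)| <= `|th1 v| * r by rewrite normrM ler_wpM2l.
    have H2 : - (th1 v * (z - xs)) <= `|th1 v * (z - xs)| by rewrite -normrN ler_norm.
    have -> : th1 v * z + th2 v = u + th1 v * (z - xs) by rewrite /u; ring.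
    lra.
  move: xsab; rewrite inab => /andP[axs xsb].
  set lo := Num.max a (xs - r).
  set hi := Num.min b (xs + r).
  have alo : a <= lo by rewrite /lo le_max lexx.
  have lo2 : xs - r <= lo by rewrite /lo le_max lexx orbT.
  have hib : hi <= b by rewrite /hi ge_min lexx.
  have hi2 : hi <= xs + r by rewrite /hi ge_min lexx orbT.
  have lohi : lo < hi.
    rewrite /lo /hi lt_min !gt_max; apply/andP; split; apply/andP; split; lra.
  set L := hi - lo.
  have L0 : 0 < L by rewrite /L subr_gt0.
  have EL : L = hi - lo by [].
  set p := lo + L / 3.
  set q := lo + 2 * L / 3.
  set e0 := Num.min (L / 3) r.
  have e00 : 0 < e0 by rewrite lt_min r0 andbT divr_gt0.
  have e01 : e0 <= L / 3 by rewrite /e0 ge_min lexx.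
  have e02 : e0 <= r by rewrite /e0 ge_min lexx orbT.
  have we : `|th1 v| * e0 <= `|th1 v| * r by rewrite ler_wpM2l.
  have pab : p \in `[a, b] by apply: inI; rewrite /p; lra.
  have qab : q \in `[a, b] by apply: inI; rewrite /q; lra.
  have Hp := Hact p ltac:(rewrite /p; lra) ltac:(rewrite /p; lra).
  have Hq := Hact q ltac:(rewrite /q; lra) ltac:(rewrite /q; lra).
  have [d0 d00 [c1 c2]] := Hdel e0 e00.
  have wr : 0 < `|th1 v| * r by rewrite mulr_gt0.
  have Kp : forall t : param R, (forall x, x \in `[a, b] -> `|realization t x - h x| <= d0) ->
      0 < th1 t * p + th2 t /\ 0 < th1 t * q + th2 t.
    move=> t ht; split.
      apply: (proj1 (keyK hv x0ab y0ab e00 ht c1 c2 _ _ _)); [rewrite /p; lra|rewrite /p; lra| |lra].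
      by rewrite (gtr0_norm (x := th1 v * p + th2 v)); lra.
    apply: (proj1 (keyK hv x0ab y0ab e00 ht c1 c2 _ _ _)); [rewrite /q; lra|rewrite /q; lra| |lra].
    by rewrite (gtr0_norm (x := th1 v * q + th2 v)); lra.
  apply/cvgrPdist_lt => eta eta0.
  have L3 : 0 < L / 3 by rewrite divr_gt0.
  set d := Num.min d0 (eta * (L / 3) / 4).
  have dp : 0 < d by rewrite lt_min d00 !divr_gt0 ?mulr_gt0.
  have dd0 : d <= d0 by rewrite /d ge_min lexx.
  have dde : d <= eta * (L / 3) / 4 by rewrite /d ge_min lexx orbT.
  move: (hu d dp); apply: filterS => n Hn.
  rewrite sub0r normrN normr_id.
  have Hn' : forall x, x \in `[a, b] -> `|realization (theta n) x - h x| <= d.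
    by move=> x xab; apply: ltW; exact: Hn.
  have [Ap Aq] := Kp (theta n) ltac:(move=> x xab; apply: le_trans dd0; exact: Hn' x xab).
  have Eq : (th1 (theta n) * th3 (theta n) - th1 v * th3 v) * (L / 3) =
      (realization (theta n) q - h q) - (realization (theta n) p - h p).
    rewrite -!hv // !real_active; [|lra|lra|lra|lra].
    rewrite /q /p; ring.
  have Hb : `|th1 (theta n) * th3 (theta n) - th1 v * th3 v| * (L / 3) <= 2 * d.
    rewrite -(gtr0_norm L3) -normrM Eq.
    apply: (le_trans (ler_normB _ _)).
    have := Hn' q qab; have := Hn' p pab; lra.
  have : `|th1 (theta n) * th3 (theta n) - th1 v * th3 v| * (L / 3) < eta * (L / 3) by lra.
  by rewrite ltr_pM2r.
-
  set tau := - th2 v / th1 v.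
  have w0' : th1 v != 0 by rewrite -normr_gt0.
  have Etau : th1 v * tau = - th2 v by rewrite /tau; field.
  have M : forall e : R, 0 < e -> \forall n \near \oo,
      (lebesgue_measure (active_set a b (theta n) `+` active_set a b v) <= (e *+ 6)%:E)%E.
    move=> e e0.
    have [d d0 [c1 c2]] := Hdel e e0.
    move: (hu d d0); apply: filterS => n Hn.
    have Hn' : forall x, x \in `[a, b] -> `|realization (theta n) x - h x| <= d.
      by move=> x xab; apply: ltW; exact: Hn.
    apply: (@meas_bound R a b tau e).
    + rewrite /setY; apply: measurableU; apply: measurableD; exact: meas_active.
    + lra.
    move=> x Hx.
    have [xab Hne] : x \in `[a, b] /\ ~ ((0 < th1 v * x + th2 v) <-> (0 < th1 (theta n) * x + th2 (theta n))).
      case: Hx => [[[xab H1] H2]|[[xab H1] H2]]; split => // Hiff.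
        by apply: H2; split => //; apply/Hiff.
      by apply: H2; split => //; apply/Hiff.
    move: (xab); rewrite inab => /andP[ax xb].
    rewrite -ball_normE /ball_ /=.
    case: (ltrP x (a + e)) => xa.
      by left; left; rewrite ltr_distlC; apply/andP; split; lra.
    case: (ltrP (b - e) x) => xb'.
      by left; right; rewrite ltr_distlC; apply/andP; split; lra.
    case: (ltrP (`|th1 v * x + th2 v|) (`|th1 v| * e)) => Hf.
      right.
      rewrite (_ : th1 v * x + th2 v = th1 v * (x - tau)) in Hf; last by rewrite mulrBr Etau; ring.
      rewrite normrM ltr_pM2l // in Hf.
      by rewrite distrC.
    by exfalso; apply: Hne; exact: (keyK hv x0ab y0ab e0 Hn' c1 c2).
  apply/fine_cvgP; split.
    move: (M 1 ltr01); apply: filterS => n Hn.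
    by rewrite ge0_fin_numE ?measure_ge0 //; exact: (le_lt_trans Hn (ltry _)).
  apply/cvgrPdist_lt => eta eta0.
  have e0 : 0 < eta / 12 by rewrite divr_gt0.
  move: (M _ e0); apply: filterS => n /= Hn.
  apply: ereal_small => //; exact: measure_ge0.
Qed.
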